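(* Let $T_1^f$ and $T_2^g$ be merge trees and let $\varepsilon \ge 0$. Then $d_I(T_1^f, T_2^g) \le \varepsilon$ if and only if there exists an $\varepsilon$-good map $\alpha: |T_1| \to |T_2|$.
   Context: A merge tree $T^h$ is a finite rooted tree $T$ together with a continuous function $h: |T| \to \mathbb{R}$ on its underlying space $|T|$ (each edge viewed as a segment, so interior points of edges are points of $|T|$) such that $h$ is decreasing along every root-to-leaf path; the tree is modified by attaching to the root a ray going upward along which $h$ increases to $+\infty$ (all merge trees are taken in this modified form). For points $u,v$, write $u \succeq v$ if $u$ is an ancestor of $v$ (possibly $u=v$). For $\varepsilon \ge 0$, $u^{\varepsilon}$ denotes the unique ancestor of $u$ with $h(u^\varepsilon) - h(u) = \varepsilon$. Given merge trees $T_1^f$ and $T_2^g$, a pair of continuous maps $\alpha: |T_1| \to |T_2|$, $\beta: |T_2| \to |T_1|$ is $\varepsilon$-compatible if for all $u \in |T_1|$: $g(\alpha(u)) = f(u)+\varepsilon$ and $\beta(\alpha(u)) = u^{2\varepsilon}$; and for all $w \in |T_2|$: $f(\beta(w)) = g(w) + \varepsilon$ and $\alpha(\beta(w)) = w^{2\varepsilon}$. The interleaving distance is $d_I(T_1^f,T_2^g) = \inf\{\varepsilon : \text{there exists a pair of } \varepsilon\text{-compatible maps}\}$. A continuous map $\alpha: |T_1| \to |T_2|$ is $\varepsilon$-good if: (P1) $g(\alpha(u)) = f(u) + \varepsilon$ for all $u \in |T_1|$; (P2) whenever $\alpha(u_1) \succeq \alpha(u_2)$, we have $u_1^{2\varepsilon}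 \succeq u_2^{2\varepsilon}$; (P3) for every $w \in |T_2| \setminus \mathrm{Im}(\alpha)$, $|g(w^F) - g(w)| \le 2\varepsilon$, where $w^F$ is the lowest ancestor of $w$ lying in $\mathrm{Im}(\alpha)$. *)

(* Defs.v *)
From HB Require Import structures.
From mathcomp Require Import all_boot all_order all_algebra.
From mathcomp Require Import all_classical all_reals ereal.
Set Implicit Arguments. Unset Strict Implicit. Unset Printing Implicit Defensive.
Import Order.TTheory GRing.Theory Num.Theory.
Local Open Scope ring_scope.
Local Open Scope classical_set_scope.

(* A merge tree (already in the modified form, with the ray above the root). *)
Record mtree (R : realType) := MTree {
  vert : finType;
  root : vert;
  par : vert -> vert;
  par_root : par root = root;
  reach_root : forall v, exists n, iter n par v = root;
  hv : vert -> R;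
  hv_par : forall v, v != root -> hv v < hv (par v) }.

Section MergeTrees.
Variable R : realType.

(* Points of the underlying space |T| (with the ray attached): a point is a
   pair (v, y) where v is a vertex and y is a height in [h v, h (par v)) --
   the point of the edge from v up to its parent at height y -- or in
   [h root, +oo) when v is the root (the ray).  The function h on |T| is the
   second component. *)
Definition is_vpoint (T : mtree R) (p : vert T * R) : Prop :=
  hv p.1 <= p.2 /\ (p.1 != root T -> p.2 < hv (par p.1)).

Definition mpoint (T : mtree R) := {p : vert T * R | is_vpoint p}.

Definition ht (T : mtree R) (p : mpoint T) : R := (proj1_sig p).2.

Definition vanc (T : mtree R) (a v : vert T) : Prop :=
  exists n, iter n (@par R T) v = a.

Definition anc (T : mtree R) (u v : mpoint T) : Prop :=
  vanc (proj1_sig u).1 (proj1_sig v).1 /\ ht v <= ht u.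

Definition is_shift (T : mtree R) (u : mpoint T) (e : R) (a : mpoint T) : Prop :=
  anc a u /\ ht a - ht u = e.

(* The path metric of |T| (edge lengths = height differences):
   d(p,q) = inf over common ancestors a of (h a - h p) + (h a - h q).
   [dist_lt p q d] means d(p,q) < d. *)
Definition dist_lt (T : mtree R) (p q : mpoint T) (d : R) : Prop :=
  exists a, anc a p /\ anc a q /\ (ht a - ht p) + (ht a - ht q) < d.

Definition mcont (T1 T2 : mtree R) (f : mpoint T1 -> mpoint T2) : Prop :=
  forall p (e : R), 0 < e -> exists d : R, 0 < d /\
    forall q, dist_lt p q d -> dist_lt (f p) (f q) e.

Definition compatible (T1 T2 : mtree R) (e : R)
    (alpha : mpoint T1 -> mpoint T2) (beta : mpoint T2 -> mpoint T1) : Prop :=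
  [/\ mcont alpha, mcont beta,
      forall u, ht (alpha u) = ht u + e /\ is_shift u (2 * e) (beta (alpha u)) &
      forall w, ht (beta w) = ht w + e /\ is_shift w (2 * e) (alpha (beta w))].

(* interleaving distance, as an extended real (inf of the empty set is +oo) *)
Definition dI (T1 T2 : mtree R) : \bar R :=
  ereal_inf (EFin @` [set e : R | 0 <= e /\
     exists (alpha : mpoint T1 -> mpoint T2) (beta : mpoint T2 -> mpoint T1),
       compatible e alpha beta]).

Definition in_image (T1 T2 : mtree R) (alpha : mpoint T1 -> mpoint T2)
  (w : mpoint T2) : Prop := exists u, alpha u = w.

Definition lowest_anc_in (T : mtree R) (S : mpoint T -> Prop) (w a : mpoint T) :
  Prop := S a /\ anc a w /\ (forall b, S b -> anc b w -> anc b a).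

Definition good (T1 T2 : mtree R) (e : R) (alpha : mpoint T1 -> mpoint T2) :
  Prop :=
  [/\ mcont alpha,
      (* P1 *) forall u, ht (alpha u) = ht u + e,
      (* P2 *) (forall u1 u2, anc (alpha u1) (alpha u2) ->
                 forall a1 a2, is_shift u1 (2 * e) a1 -> is_shift u2 (2 * e) a2 ->
                   anc a1 a2) &
      (* P3 *) forall w, ~ in_image alpha w ->
                 forall a, lowest_anc_in (in_image alpha) w a ->
                   `|ht a - ht w| <= 2 * e].

End MergeTrees.

(* Main.v *)
Require Import Defs.
From HB Require Import structures.
From mathcomp Require Import all_boot all_order all_algebra.
From mathcomp Require Import all_classical all_reals ereal.
Import Order.TTheory GRing.Theory Num.Theory.
Local Open Scope ring_scope.
From mathcomp Require Import lra.
Set Implicit Arguments. Unset Strict Implicit. Unset Printing Implicit Defensive.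


Section Basics.
Variable R : realType.
Variable T : mtree R.
Local Notation rootT := (@Defs.root R T).
Implicit Types (a b c v : vert T) (p q u x y z : mpoint T).

Definition pv (p : mpoint T) : vert T := (proj1_sig p).1.

Lemma pvP (p : mpoint T) : hv (pv p) <= ht p /\ (pv p != rootT -> ht p < hv (par (pv p))).
Proof. by case: p => [[v y] H]. Qed.

Lemma pt_ext (p q : mpoint T) : pv p = pv q -> ht p = ht q -> p = q.
Proof.
case: p => [[v y] Hp]; case: q => [[w z] Hq]; rewrite /pv /ht /= => E1 E2.
subst; congr exist; exact: Prop_irrelevance.
Qed.

Lemma iter_root n : iter n (@par R T) (rootT) = rootT.
Proof. by elim: n => //= n ->; rewrite par_root. Qed.

Lemma vanc_refl v : vanc v v. Proof. by exists 0%N. Qed.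

Lemma vanc_trans a b c : vanc a b -> vanc b c -> vanc a c.
Proof. by move=> [m <-] [n <-]; exists (m + n)%N; rewrite iterD. Qed.

Lemma vanc_par v : vanc (par v) v. Proof. by exists 1%N. Qed.

Lemma vanc_root v : vanc (rootT) v. Proof. exact: reach_root. Qed.

Lemma vanc_of_root a : vanc a (rootT) -> a = rootT.
Proof. by move=> [n <-]; rewrite iter_root. Qed.

Lemma hv_par_le v : hv v <= hv (par v).
Proof.
case: (eqVneq v (rootT)) => [->|nr]; first by rewrite par_root.
exact/ltW/hv_par.
Qed.

Lemma hv_vanc a v : vanc a v -> hv v <= hv a.
Proof.
move=> [n <-]; elim: n => //= n IH; exact: le_trans IH (hv_par_le _).
Qed.

Lemma vanc_strict a v : vanc a v -> a != v -> v != rootT /\ vanc a (par v).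
Proof.
move=> [[|n] E] nav; first by rewrite -E eqxx in nav.
split.
  apply/eqP => vr; move: E; rewrite vr iter_root => ar; by move: nav; rewrite -ar vr eqxx.
by exists n; rewrite -iterSr.
Qed.

Lemma vanc_total a b v : vanc a v -> vanc b v -> vanc a b \/ vanc b a.
Proof.
move=> [m <-] [n <-]; case: (leqP m n) => mn.
  right; exists (n - m)%N; by rewrite -iterD subnK.
left; exists (m - n)%N; by rewrite -iterD subnK // ltnW.
Qed.

Lemma vanc_lt a v : vanc a v -> a != v -> hv v < hv a.
Proof.
move=> av nav; have [nr apv] := vanc_strict av nav.
exact: lt_le_trans (hv_par nr) (hv_vanc apv).
Qed.

Lemma vanc_antisym a b : vanc a b -> vanc b a -> a = b.
Proof.
move=> ab ba; apply/eqP; apply/negPn/negP => nab.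
have := vanc_lt ab nab; have := hv_vanc ba; lra.
Qed.

Lemma pt_below (a p : mpoint T) : vanc (pv a) (pv p) -> pv a != pv p -> ht p < hv (pv a).
Proof.
move=> av nav; have [nr apv] := vanc_strict av nav.
have [_ H] := pvP p; exact: lt_le_trans (H nr) (hv_vanc apv).
Qed.

Lemma anc_refl (p : mpoint T) : anc p p.
Proof. by split; [apply: vanc_refl|]. Qed.

Lemma anc_trans (a b c : mpoint T) : anc a b -> anc b c -> anc a c.
Proof. move=> [ab hab] [bc hbc]; split; [exact: vanc_trans ab bc|exact: le_trans hbc hab]. Qed.

Lemma anc_ht (a p : mpoint T) : anc a p -> ht p <= ht a.
Proof. by case. Qed.

Lemma anc_total (a b p : mpoint T) : anc a p -> anc b p -> anc a b \/ anc b a.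
Proof.
move=> [ap hap] [bp hbp]; case: (vanc_total ap bp) => ab.
  case: (leP (ht b) (ht a)) => hab; first by left.
  right; split=> //; last exact: ltW.
  change (vanc (pv b) (pv a)); change (vanc (pv a) (pv b)) in ab.
  case: (eqVneq (pv a) (pv b)) => [->|nab]; first exact: vanc_refl.
  have := pt_below ab nab; have := (pvP a).1; lra.
case: (leP (ht a) (ht b)) => hab; first by right.
left; split=> //; last exact: ltW.
change (vanc (pv a) (pv b)); change (vanc (pv b) (pv a)) in ab.
case: (eqVneq (pv b) (pv a)) => [->|nab]; first exact: vanc_refl.
have := pt_below ab nab; have := (pvP b).1; lra.
Qed.

Lemma anc_eq (a b : mpoint T) : anc a b -> ht a = ht b -> a = b.
Proof.
move=> [ab _] hab; apply: pt_ext => //.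
apply/eqP; apply/negPn/negP => nab.
have := pt_below ab nab; have := (pvP a).1; lra.
Qed.

Lemma anc_le (a b p : mpoint T) : anc a p -> anc b p -> ht a <= ht b -> anc b a.
Proof.
move=> ap bp hab; case: (anc_total ap bp) => // H.
have E : a = b by apply: (anc_eq H); apply: le_anti; rewrite hab (anc_ht H).
by rewrite E; apply: anc_refl.
Qed.

Lemma anc_uniq (a b p : mpoint T) : anc a p -> anc b p -> ht a = ht b -> a = b.
Proof.
move=> ap bp hab; apply: anc_eq; last by [].
by apply: anc_le bp ap _; rewrite hab.
Qed.


Lemma up_ex v (H : R) : hv v <= H ->
  exists w, vanc w v /\ hv w <= H /\ (w != rootT -> H < hv (par w)).
Proof.
have [n Hn] := reach_root v.
elim: n v Hn => [|n IH] v Hn hvH.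
  by exists v; split; [exact: vanc_refl|split=> // /negP; rewrite -Hn eqxx].
case: (eqVneq v rootT) => [vr|nr].
  by exists v; split; [exact: vanc_refl|split=> // /negP; rewrite vr eqxx].
case: (ltP H (hv (par v))) => Hp.
  by exists v; split; [exact: vanc_refl|split].
have Hn' : iter n (@par R T) (par v) = rootT by rewrite -iterSr.
have [w [wv [hw Hw]]] := IH (par v) Hn' Hp.
exists w; split=> //; exact: vanc_trans wv (vanc_par v).
Qed.

Lemma vpt_proof v : is_vpoint (v, hv v).
Proof. by split=> //= nr; exact: hv_par. Qed.

Definition vpt v : mpoint T := exist _ (v, hv v) (vpt_proof v).

Definition mkpt (x : vert T * R) : mpoint T :=
  match pselect (is_vpoint x) with
  | left H => exist _ x H
  | right _ => vpt rootT
  end.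

Lemma mkptE (x : vert T * R) : is_vpoint x -> proj1_sig (mkpt x) = x.
Proof. by rewrite /mkpt; case: pselect. Qed.

Definition upv v (H : R) : vert T :=
  match pselect (hv v <= H) with
  | left Hle => proj1_sig (cid (up_ex Hle))
  | right _ => v
  end.

Lemma upvP v H : hv v <= H ->
  vanc (upv v H) v /\ hv (upv v H) <= H /\ (upv v H != rootT -> H < hv (par (upv v H))).
Proof. by rewrite /upv; case: pselect => // Hle _; case: cid. Qed.

Definition sh (t : R) (p : mpoint T) : mpoint T :=
  mkpt (upv (pv p) (ht p + t), ht p + t).

Lemma sh_spec t p : 0 <= t -> anc (sh t p) p /\ ht (sh t p) = ht p + t.
Proof.
move=> t0; have hp := (pvP p).1.
have hle : hv (pv p) <= ht p + t by lra.
have [H1 [H2 H3]] := upvP hle.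
have E := @mkptE (upv (pv p) (ht p + t), ht p + t) (conj H2 H3).
rewrite /sh /anc /ht E /=; split=> //; split=> //.
rewrite /ht -/(ht p); lra.
Qed.

Lemma sh_anc t p : 0 <= t -> anc (sh t p) p. Proof. by move=> t0; case: (sh_spec p t0). Qed.
Lemma sh_ht t p : 0 <= t -> ht (sh t p) = ht p + t. Proof. by move=> t0; case: (sh_spec p t0). Qed.

Lemma sh_eq (a p : mpoint T) t : anc a p -> ht a = ht p + t -> a = sh t p.
Proof.
move=> ap hap; have t0 : 0 <= t by have := anc_ht ap; lra.
apply: (anc_uniq ap (sh_anc p t0)); by rewrite sh_ht.
Qed.

Lemma anc_sh (a p : mpoint T) : anc a p -> a = sh (ht a - ht p) p.
Proof. by move=> ap; apply: sh_eq => //; lra. Qed.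

Lemma sh0 p : sh 0 p = p.
Proof. by apply/esym/sh_eq; [exact: anc_refl|lra]. Qed.

Lemma sh_add s t p : 0 <= s -> 0 <= t -> sh s (sh t p) = sh (s + t) p.
Proof.
move=> s0 t0; apply: sh_eq.
  exact: anc_trans (sh_anc _ s0) (sh_anc _ t0).
by rewrite sh_ht // sh_ht //; lra.
Qed.

Lemma sh_mono t (a b : mpoint T) : 0 <= t -> anc a b -> anc (sh t a) (sh t b).
Proof.
move=> t0 ab; apply: (anc_le (p := b)).
- exact: sh_anc.
- exact: anc_trans (sh_anc _ t0) ab.
- by rewrite !sh_ht //; have := anc_ht ab; lra.
Qed.

Lemma is_shiftE u e (a : mpoint T) : is_shift u e a -> a = sh e u.
Proof. by move=> [au hau]; apply: sh_eq => //; lra. Qed.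

Lemma is_shift_sh u e : 0 <= e -> is_shift u e (sh e u).
Proof. by move=> e0; split; [exact: sh_anc|rewrite sh_ht //; lra]. Qed.

Lemma dist_sym p q D : dist_lt p q D -> dist_lt q p D.
Proof. by move=> [c [cp [cq H]]]; exists c; split=> //; split=> //; lra. Qed.

Lemma dist_mono p q D D' : dist_lt p q D -> D <= D' -> dist_lt p q D'.
Proof. by move=> [c [cp [cq H]]] DD; exists c; split=> //; split=> //; lra. Qed.

Lemma dist_anc (a p : mpoint T) D : anc a p -> ht a - ht p < D -> dist_lt a p D.
Proof. by move=> ap H; exists a; split; [exact: anc_refl|split=> //; lra]. Qed.

Lemma dist_sh_aux t x y D : 0 <= t -> ht x <= ht y -> dist_lt x y D ->
  dist_lt (sh t x) (sh t y) D.
Proof.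
move=> t0 hxy [c [cx [cy H]]].
have hcx := anc_ht cx; have hcy := anc_ht cy.
case: (leP (ht y + t) (ht c)) => hm.
  exists c; split.
    by apply: (anc_le (sh_anc x t0) cx); rewrite sh_ht //; lra.
  split; first by apply: (anc_le (sh_anc y t0) cy); rewrite sh_ht //; lra.
  by rewrite !sh_ht //; lra.
have m0 : 0 <= ht y + t - ht c by lra.
set c' := sh (ht y + t - ht c) c.
have c'c : anc c' c by exact: sh_anc.
have hc' : ht c' = ht y + t by rewrite /c' sh_ht //; lra.
exists c'; split.
  by apply: (anc_le (sh_anc x t0) (anc_trans c'c cx)); rewrite sh_ht //; lra.
split; first by apply: (anc_le (sh_anc y t0) (anc_trans c'c cy)); rewrite sh_ht //; lra.
by rewrite !sh_ht //; move: hc'; rewrite /c'; lra.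
Qed.

Lemma dist_sh t x y D : 0 <= t -> dist_lt x y D -> dist_lt (sh t x) (sh t y) D.
Proof.
move=> t0 H; case: (leP (ht x) (ht y)) => hxy; first exact: dist_sh_aux.
apply: dist_sym; apply: dist_sh_aux => //; [exact: ltW|exact: dist_sym].
Qed.

Lemma dist_unsh t x y D : 0 <= t -> dist_lt (sh t x) (sh t y) D -> dist_lt x y (D + 2 * t).
Proof.
move=> t0 [c [cx [cy H]]]; exists c; split; first exact: anc_trans cx (sh_anc _ t0).
split; first exact: anc_trans cy (sh_anc _ t0).
by move: H; rewrite !sh_ht //; lra.
Qed.

Definition rho (y : mpoint T) : R :=
  if pv y == rootT then 1 else hv (par (pv y)) - ht y.

Lemma rho_gt0 y : 0 < rho y.
Proof.
rewrite /rho; case: eqP => // /eqP nr; have := (pvP y).2 nr; lra.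
Qed.

Lemma anc_small_pv (c y : mpoint T) : anc c y -> ht c - ht y < rho y -> pv c = pv y.
Proof.
move=> [cy _] H; apply/eqP; apply/negPn/negP => ncy.
have [nr cp] := vanc_strict cy ncy.
move: H; rewrite /rho (negPf nr) => H.
have := hv_vanc cp; have := (pvP c).1; rewrite /pv in nr *; lra.
Qed.

Lemma star y z : dist_lt y z (rho y) -> anc y z \/ anc z y.
Proof.
move=> [c [cy [cz H]]].
have hcz := anc_ht cz.
have E : pv c = pv y by apply: (anc_small_pv cy); lra.
have [cz' _] := cz; change (vanc (pv c) (pv z)) in cz'; rewrite E in cz'.
case: (leP (ht z) (ht y)) => hzy; first by left; split.
right; split; last exact: ltW.
change (vanc (pv z) (pv y)).
case: (eqVneq (pv y) (pv z)) => [->|nyz]; first exact: vanc_refl.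
have := pt_below cz' nyz; have := (pvP y).1; lra.
Qed.

Lemma comp_ht (a b : mpoint T) : anc a b \/ anc b a -> ht a <= ht b -> anc b a.
Proof.
case=> // ab hab.
have E : a = b by apply: (anc_eq ab); apply: le_anti; rewrite hab (anc_ht ab).
by rewrite E; apply: anc_refl.
Qed.

Lemma sh_small_pv t (x : mpoint T) : 0 <= t -> t < rho x -> pv (sh t x) = pv x.
Proof. by move=> t0 tr; apply: anc_small_pv; [exact: sh_anc|rewrite sh_ht //; lra]. Qed.

Lemma sh_cancel (x y : mpoint T) : ht x = ht y ->
  (forall eta, 0 < eta -> exists d, 0 < d /\ d < eta /\ sh d x = sh d y) -> x = y.
Proof.
move=> hxy H.
have m0 : 0 < Num.min (rho x) (rho y) by rewrite lt_min !rho_gt0.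
have [d [d0 [dm E]]] := H _ m0.
move: dm; rewrite lt_min => /andP[dx dy].
apply: pt_ext => //.
by rewrite -(sh_small_pv (ltW d0) dx) -(sh_small_pv (ltW d0) dy) E.
Qed.

Lemma high_pv (p : mpoint T) : hv rootT <= ht p -> pv p = rootT.
Proof.
move=> H; apply/eqP; apply/negPn/negP => nr.
have := (pvP p).2 nr; have := hv_vanc (vanc_root (par (pv p))); lra.
Qed.

Lemma high_eq (p q : mpoint T) : hv rootT <= ht p -> ht p = ht q -> p = q.
Proof.
move=> H E; apply: pt_ext => //; rewrite !high_pv //; lra.
Qed.

Lemma vpt_anc (p : mpoint T) : anc p (vpt (pv p)).
Proof. by split; [exact: vanc_refl|exact: (pvP p).1]. Qed.

Lemma pt_from_vpt (p : mpoint T) : p = sh (ht p - hv (pv p)) (vpt (pv p)).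
Proof. exact: (anc_sh (vpt_anc p)). Qed.

End Basics.



Lemma inf_props (R : realType) (E : set R) (x0 : R) : E x0 -> (forall x, E x -> 0 <= x) ->
  [/\ 0 <= inf E, (forall x, E x -> inf E <= x) &
      (forall eta, 0 < eta -> exists x, E x /\ x < inf E + eta)].
Proof.
move=> Ex0 E0.
have lb : has_lbound E by exists 0 => x Ex; exact: E0.
have hi : has_inf E by split => //; exists x0.
split.
- by apply: lb_le_inf; [exists x0|move=> x Ex; exact: E0].
- by move=> x Ex; apply: ge_inf.
- by move=> eta eta0; have [x Ex H] := inf_adherent eta0 hi; exists x.
Qed.

Lemma sh_split (R : realType) (T : mtree R) (s t : R) (p : mpoint T) :
  0 <= s -> s <= t -> sh t p = sh (t - s) (sh s p).
Proof.
move=> s0 st; rewrite sh_add; last by [].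
  by congr sh; lra.
by lra.
Qed.

Section Maps.
Variable R : realType.
Variables T1 T2 : mtree R.
Implicit Types (u p q x : mpoint T1).
Variable f : mpoint T1 -> mpoint T2.
Variable k : R.
Hypothesis hf : forall p, ht (f p) = ht p + k.

Definition monot := forall p t, 0 <= t -> f (sh t p) = sh t (f p).

Lemma mono_anc : monot -> forall a b, anc a b -> anc (f a) (f b).
Proof.
move=> mf a b ab; have t0 : 0 <= ht a - ht b by have := anc_ht ab; lra.
by rewrite (anc_sh ab) (mf _ _ t0); apply: sh_anc.
Qed.

Lemma mono_cont : monot -> mcont f.
Proof.
move=> mf p e e0; exists e; split=> // q [c [cp [cq H]]].
exists (f c); split; first exact: mono_anc.
split; first exact: mono_anc.
by rewrite !hf; lra.
Qed.

Lemma local_up : mcont f -> forall x, exists r, 0 < r /\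
  forall s, 0 <= s -> s < r -> anc (f (sh s x)) (f x).
Proof.
move=> cf x; have [d [d0 Hd]] := cf x _ (rho_gt0 (f x)).
exists d; split=> // s s0 sd.
have H : dist_lt x (sh s x) d.
  by apply: dist_sym; apply: dist_anc; [exact: sh_anc|rewrite sh_ht //; lra].
apply: comp_ht; first exact: star (Hd _ H).
by rewrite !hf sh_ht //; lra.
Qed.

Lemma local_down : mcont f -> forall x, exists r, 0 < r /\
  forall q, anc x q -> ht x - ht q < r -> anc (f x) (f q).
Proof.
move=> cf x; have [d [d0 Hd]] := cf x _ (rho_gt0 (f x)).
exists d; split=> // q xq hq.
have H : dist_lt x q d by apply: dist_anc.
have := star (Hd _ H); case=> // H2.
apply: (comp_ht (or_introl H2)).
by rewrite !hf; have := anc_ht xq; lra.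
Qed.

Lemma cont_mono : mcont f -> monot.
Proof.
move=> cf u t t0.
suff A : anc (f (sh t u)) (f u).
  by apply: sh_eq => //; rewrite !hf sh_ht //; lra.
pose D : set R := fun s => 0 <= s /\ s <= t /\ anc (f (sh t u)) (f (sh s u)).
have Dt : D t by split=> //; split=> //; exact: anc_refl.
have [T0 lbT adT] := inf_props Dt (fun (s : R) (Ds : D s) => Ds.1).
set I := inf D in T0 lbT adT.
have It : I <= t by exact: lbT.
have DI : D I.
  have [r [r0 Hr]] := local_up cf (sh I u).
  have [s [[s0 [st Hs]] sI]] := adT _ r0.
  have Is := lbT _ (conj s0 (conj st Hs)).
  split=> //; split=> //.
  apply: (anc_trans Hs).
  rewrite (sh_split u T0 Is).
  apply: Hr; lra.
case: (eqVneq I 0) => [I0|nI0].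
  by move: DI; rewrite I0 => -[_ [_]]; rewrite sh0.
have Ipos : 0 < I by rewrite lt_neqAle eq_sym nI0 T0.
have [r [r0 Hr]] := local_down cf (sh I u).
pose m := Num.min r I / 2.
have m0 : 0 < m by rewrite /m divr_gt0 // lt_min r0 Ipos.
have mr : m < r /\ m <= I.
  have /andP[Mr MI] : (Num.min r I <= r) && (Num.min r I <= I) by rewrite -le_min.
  have M0 : 0 < Num.min r I by rewrite lt_min r0 Ipos.
  move: Mr MI M0; rewrite /m; move: (Num.min r I) => M Mr MI M0; split; lra.
have DIm : D (I - m).
  split; first lra. split; first lra.
  apply: (anc_trans DI.2.2); apply: Hr.
    have h1 : 0 <= I - m by lra.
    have h2 : I - m <= I by lra.
    rewrite (sh_split u h1 h2).
    by apply: sh_anc; lra.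
  by rewrite !sh_ht //; lra.
have := lbT _ DIm; lra.
Qed.

End Maps.



Lemma fin_min (R : realType) (K : finType) (g : K -> R) : (forall k, 0 < g k) ->
  exists m, 0 < m /\ forall k, m <= g k.
Proof.
move=> g0.
suff [m [m0 Hm]] : exists m, 0 < m /\ forall k, k \in enum K -> m <= g k.
  by exists m; split=> // k; apply: Hm; rewrite mem_enum.
elim: (enum K) => [|x s [m [m0 Hm]]]; first by exists 1.
exists (Num.min m (g x)); split; first by rewrite lt_min m0 g0.
move=> k; rewrite inE => /orP[/eqP ->|ks]; first by rewrite ge_min lexx orbT.
by rewrite ge_min Hm.
Qed.

Lemma pigeon (R : realType) (K : finType) (Q : K -> R -> Prop) :
  (forall eta, 0 < eta -> exists k, Q k eta) ->
  (forall k eta eta', Q k eta -> eta <= eta' -> Q k eta') ->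
  exists k, forall eta, 0 < eta -> Q k eta.
Proof.
move=> H Hm; apply: contrapT => N.
have N' : forall k, exists eta, 0 < eta /\ ~ Q k eta.
  move=> k; apply: contrapT => N2; apply: N; exists k => eta eta0.
  by apply: contrapT => N3; apply: N2; exists eta.
have [g Hg] := choice N'.
have [m [m0 Hm0]] := fin_min (fun k => (Hg k).1).
have [k Qk] := H _ m0.
by apply: (Hg k).2; apply: Hm Qk _.
Qed.

Lemma sh_comm (R : realType) (T : mtree R) (s t : R) (p : mpoint T) :
  0 <= s -> 0 <= t -> sh s (sh t p) = sh t (sh s p).
Proof. by move=> s0 t0; rewrite !sh_add // addrC. Qed.

Section Compat.
Variable R : realType.
Variables T1 T2 : mtree R.
Variable e : R.

Lemma compat_good (e0 : 0 <= e) (alpha : mpoint T1 -> mpoint T2) beta :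
  compatible e alpha beta -> good e alpha.
Proof.
case=> ca cb Ha Hb.
have hb : forall w, ht (beta w) = ht w + e by move=> w; case: (Hb w).
have mb := cont_mono hb cb.
have e2 : 0 <= 2 * e by lra.
split=> //; first by move=> u; case: (Ha u).
- move=> u1 u2 A a1 a2 s1 s2.
  rewrite (is_shiftE s1) (is_shiftE s2) -(is_shiftE (Ha u1).2) -(is_shiftE (Ha u2).2).
  exact: (mono_anc mb).
- move=> w _ a [_ [aw low]].
  have I : in_image alpha (sh (2 * e) w) by exists (beta w); exact: (is_shiftE (Hb w).2).
  have := anc_ht (low _ I (sh_anc w e2)); have := anc_ht aw; rewrite sh_ht // => h1 h2.
  rewrite ger0_norm; lra.
Qed.

Lemma compat_up (e0 : 0 <= e) (alpha : mpoint T1 -> mpoint T2) beta e' :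
  e <= e' -> compatible e alpha beta ->
  compatible e' (fun u => sh (e' - e) (alpha u)) (fun w => sh (e' - e) (beta w)).
Proof.
move=> ee [ca cb Ha Hb].
have d0 : 0 <= e' - e by lra.
have ha : forall u, ht (alpha u) = ht u + e by move=> u; case: (Ha u).
have hb : forall w, ht (beta w) = ht w + e by move=> w; case: (Hb w).
have ma := cont_mono ha ca; have mb := cont_mono hb cb.
have ha' : forall u, ht (sh (e' - e) (alpha u)) = ht u + e' by move=> u; rewrite sh_ht // ha; lra.
have hb' : forall w, ht (sh (e' - e) (beta w)) = ht w + e' by move=> w; rewrite sh_ht // hb; lra.
have e2 : 0 <= 2 * e by lra.
split.
- apply: (mono_cont ha') => p t t0; by rewrite ma // sh_comm.
- apply: (mono_cont hb') => p t t0; by rewrite mb // sh_comm.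
- move=> u; split=> //.
  rewrite mb // sh_add // (is_shiftE (Ha u).2) sh_add //; last lra.
  have -> : e' - e + (e' - e) + 2 * e = 2 * e' by lra.
  by apply: is_shift_sh; lra.
- move=> w; split=> //.
  rewrite ma // sh_add // (is_shiftE (Hb w).2) sh_add //; last lra.
  have -> : e' - e + (e' - e) + 2 * e = 2 * e' by lra.
  by apply: is_shift_sh; lra.
Qed.

End Compat.



Section Good.
Variable R : realType.
Variables T1 T2 : mtree R.
Variable e : R.
Variable alpha : mpoint T1 -> mpoint T2.
Local Notation r1 := (@Defs.root R T1).
Local Notation r2 := (@Defs.root R T2).

Lemma image_high (ha : forall u, ht (alpha u) = ht u + e) (w : mpoint T2) :
  exists t, 0 <= t /\ in_image alpha (sh t w).
Proof.
pose t := `|hv r2 - ht w| + `|hv r1 + e - ht w|.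
have h1 := ler_norm (hv r2 - ht w); have h2 := ler_norm (hv r1 + e - ht w).
have n1 := normr_ge0 (hv r2 - ht w); have n2 := normr_ge0 (hv r1 + e - ht w).
have t0 : 0 <= t by rewrite /t; lra.
exists t; split=> //.
have vp : is_vpoint (r1, ht w + t - e) by split=> /=; [rewrite /t; lra|rewrite eqxx].
exists (mkpt (r1, ht w + t - e)).
have hm : ht (mkpt (r1, ht w + t - e)) = ht w + t - e by rewrite /ht mkptE.
apply: high_eq; first by rewrite ha hm; rewrite /t; lra.
by rewrite ha hm sh_ht //; lra.
Qed.

Lemma lowest_ex (e0 : 0 <= e) (ga : good e alpha) (w : mpoint T2) :
  exists a, lowest_anc_in (in_image alpha) w a.
Proof.
case: ga => ca ha P2 P3.
have ma := cont_mono ha ca.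
pose I : set R := fun t => 0 <= t /\ in_image alpha (sh t w).
have [t1 [t10 It1]] := image_high ha w.
have [T0 lbT adT] := inf_props (conj t10 It1 : I t1) (fun (s : R) (Is : I s) => Is.1).
set J := inf I in T0 lbT adT.
suff IJ : I J.
  exists (sh J w); split; first exact: IJ.2.
  split; first exact: sh_anc.
  move=> b Ib bw; apply: (anc_le (sh_anc w T0) bw).
  have Ib' : I (ht b - ht w).
    split; first by have := anc_ht bw; lra.
    by rewrite -(anc_sh bw).
  by have := lbT _ Ib'; rewrite sh_ht //; lra.
apply: contrapT => nIJ.
pose Q (v : vert T1) (eta : R) := exists t : R, I t /\ (t < J + eta) /\
  (exists u, alpha u = sh t w /\ pv u = v).
have [v Hv] : exists v, forall eta, 0 < eta -> Q v eta.
  apply: pigeon.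
    move=> eta eta0; have [t [It tJ]] := adT _ eta0.
    have [u Hu] := It.2; exists (pv u); exists t; split=> //; split=> //.
    by exists u.
  move=> v' eta eta' [t [It [tJ Hu]]] ee; exists t; split=> //; split=> //; lra.
have hvJ : hv v + e <= ht w + J.
  rewrite leNgt; apply/negP => gap.
  have g0 : 0 < hv v + e - (ht w + J) by lra.
  have [t [It [tJ [u [Hu pu]]]]] := Hv _ g0.
  have := (pvP u).1; rewrite pu => hu.
  have := ha u; rewrite Hu sh_ht; last exact: It.1.
  lra.
have c0 : 0 <= ht w + J - e - hv v by lra.
pose u0 := sh (ht w + J - e - hv v) (vpt v).
have hu0 : ht u0 = ht w + J - e by rewrite /u0 sh_ht //=; rewrite /ht /=; lra.
apply: (nIJ); split=> //; exists u0.
apply: sh_cancel; first by rewrite ha hu0 sh_ht //; lra.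
move=> eta eta0; have [t [It [tJ [u [Hu pu]]]]] := Hv _ eta0.
have Jt : J <= t by exact: lbT.
have Jt' : J < t.
  rewrite lt_neqAle Jt andbT; apply/eqP => E; apply: nIJ; by rewrite E.
exists (t - J); split; first lra. split; first lra.
have d0 : 0 <= t - J by lra.
rewrite -(ma _ _ d0) sh_add //.
have -> : t - J + J = t by lra.
rewrite -Hu; congr alpha.
rewrite (pt_from_vpt u) /u0 sh_add // pu; congr sh.
have := ha u; rewrite Hu sh_ht ?It.1 //; lra.
Qed.



Lemma lowest_uniq (S : mpoint T2 -> Prop) w a b :
  lowest_anc_in S w a -> lowest_anc_in S w b -> a = b.
Proof.
move=> [Sa [aw la]] [Sb [bw lb]].
have ab := lb _ Sa aw; have ba := la _ Sb bw.
apply: (anc_eq ab); apply: le_anti; rewrite (anc_ht ab) (anc_ht ba).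
done.
Qed.

Lemma lowest_self (w : mpoint T2) : in_image alpha w -> lowest_anc_in (in_image alpha) w w.
Proof. by move=> Iw; split=> //; split; [exact: anc_refl|]. Qed.

Definition lowest (w : mpoint T2) : mpoint T2 :=
  match pselect (exists a, lowest_anc_in (in_image alpha) w a) with
  | left H => proj1_sig (cid H)
  | right _ => w
  end.

Lemma lowestP (e0 : 0 <= e) (ga : good e alpha) w : lowest_anc_in (in_image alpha) w (lowest w).
Proof.
rewrite /lowest; case: pselect => [H|N]; first by case: cid.
by case: N; apply: lowest_ex.
Qed.

Definition preim (a : mpoint T2) : mpoint T1 :=
  match pselect (in_image alpha a) with
  | left H => proj1_sig (cid H)
  | right _ => vpt r1
  end.

Lemma preimP a : in_image alpha a -> alpha (preim a) = a.
Proof. by rewrite /preim; case: pselect => // H _; case: cid. Qed.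

Definition betamap (w : mpoint T2) : mpoint T1 :=
  sh (ht w + 2 * e - ht (lowest w)) (preim (lowest w)).

Lemma good_compat (e0 : 0 <= e) (ga : good e alpha) : compatible e alpha betamap.
Proof.
have [ca ha P2 P3] := ga.
have ma := cont_mono ha ca.
have e2 : 0 <= 2 * e by lra.
have P2eq : forall u1 u2, alpha u1 = alpha u2 -> sh (2 * e) u1 = sh (2 * e) u2.
  move=> u1 u2 E.
  have A : anc (sh (2 * e) u1) (sh (2 * e) u2).
    by apply: (P2 u1 u2); [rewrite E; exact: anc_refl|exact: is_shift_sh|exact: is_shift_sh].
  apply: (anc_eq A); rewrite !sh_ht //.
  by have := ha u1; have := ha u2; rewrite E; lra.
have L := lowestP e0 ga.
have bound : forall w, ht (lowest w) - ht w <= 2 * e.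
  move=> w; case: (pselect (in_image alpha w)) => Iw.
    by rewrite (lowest_uniq (L w) (lowest_self Iw)); lra.
  have := P3 w Iw _ (L w) => H; have := ler_norm (ht (lowest w) - ht w); lra.
have hpre : forall w, ht (preim (lowest w)) = ht (lowest w) - e.
  by move=> w; have := ha (preim (lowest w)); rewrite preimP; [lra|exact: (L w).1].
have hb : forall w, ht (betamap w) = ht w + e.
  by move=> w; rewrite /betamap sh_ht ?hpre; [lra|have := bound w; lra].
have mb : monot betamap.
  move=> w s s0.
  have am0 : 0 <= ht w + 2 * e - ht (lowest w) by have := bound w; lra.
  have [Fi [Fw Fl]] := L w.
  have hFw := anc_ht Fw.
  case: (leP (ht w + s) (ht (lowest w))) => hs.
    have E : lowest (sh s w) = lowest w.
      apply: (lowest_uniq (L (sh s w))); split=> //; split.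
        by apply: (anc_le (sh_anc w s0) Fw); rewrite sh_ht.
      by move=> b Ib bw; apply: Fl => //; apply: anc_trans bw (sh_anc w s0).
    rewrite /betamap E sh_add // sh_ht //; congr sh; lra.
  have c0 : 0 <= ht w + s - ht (lowest w) by lra.
  have Ew : sh s w = alpha (sh (ht w + s - ht (lowest w)) (preim (lowest w))).
    rewrite ma // preimP //; symmetry; apply: sh_eq.
      exact: anc_trans (sh_anc _ c0) Fw.
    by rewrite sh_ht //; lra.
  have Iw : in_image alpha (sh s w) by exists (sh (ht w + s - ht (lowest w)) (preim (lowest w))); rewrite Ew.
  rewrite /betamap (lowest_uniq (L (sh s w)) (lowest_self Iw)).
  have -> : ht (sh s w) + 2 * e - ht (sh s w) = 2 * e by lra.
  rewrite (P2eq _ _ (eq_trans (preimP Iw) Ew)) !sh_add //.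
  by congr sh; lra.
split.
- exact: ca.
- exact: (mono_cont hb mb).
- move=> u; split=> //.
  have Iw : in_image alpha (alpha u) by exists u.
  rewrite /betamap (lowest_uniq (L (alpha u)) (lowest_self Iw)).
  have -> : ht (alpha u) + 2 * e - ht (alpha u) = 2 * e by lra.
  rewrite (P2eq _ _ (preimP Iw)); exact: is_shift_sh.
- move=> w; split=> //.
  have am0 : 0 <= ht w + 2 * e - ht (lowest w) by have := bound w; lra.
  have [Fi [Fw _]] := L w.
  rewrite /betamap ma // preimP //.
  have -> : sh (ht w + 2 * e - ht (lowest w)) (lowest w) = sh (2 * e) w.
    apply: sh_eq; first exact: anc_trans (sh_anc _ am0) Fw.
    by rewrite sh_ht //; lra.
  exact: is_shift_sh.
Qed.

End Good.



Section Limit.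
Variable R : realType.
Variables T1 T2 : mtree R.
Variable eps : R.
Variable c : vert T1 -> vert T2.

Definition fam (F : mpoint T1 -> mpoint T2) (d : R) :=
  [/\ 0 < d, mcont F, (forall p, ht (F p) = ht p + (eps + d)) &
      (forall v, pv (F (vpt v)) = c v)].

Hypothesis Hfam : forall eta, 0 < eta -> exists d F, d < eta /\ fam F d.

Definition Pv (v : vert T1) : mpoint T2 := mkpt (c v, hv v + eps).

Definition limmap (u : mpoint T1) : mpoint T2 := sh (ht u - hv (pv u)) (Pv (pv u)).

Lemma lim_valid v : is_vpoint (c v, hv v + eps).
Proof.
split=> /=.
  rewrite leNgt; apply/negP => gap.
  have g0 : 0 < hv (c v) - (hv v + eps) by lra.
  have [d [F [dg [d0 _ hF cF]]]] := Hfam g0.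
  have := (pvP (F (vpt v))).1; rewrite cF hF /ht /=; lra.
move=> nr.
have [d [F [_ [d0 _ hF cF]]]] := Hfam ltr01.
have := (pvP (F (vpt v))).2; rewrite cF => /(_ nr); rewrite hF /ht /=; lra.
Qed.

Lemma Pv_pv v : pv (Pv v) = c v.
Proof. by rewrite /pv /Pv mkptE //; exact: lim_valid. Qed.

Lemma Pv_ht v : ht (Pv v) = hv v + eps.
Proof. by rewrite /ht /Pv mkptE //; exact: lim_valid. Qed.

Lemma lim_ht u : ht (limmap u) = ht u + eps.
Proof.
have := (pvP u).1 => h.
by rewrite /limmap sh_ht ?Pv_ht; lra.
Qed.

Lemma lim_rel F d : fam F d -> forall u, F u = sh d (limmap u).
Proof.
case=> d0 cF hF tF u.
have mF := cont_mono hF cF.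
have a0 : 0 <= ht u - hv (pv u) by have := (pvP u).1; lra.
rewrite {1}(pt_from_vpt u) mF //.
have -> : F (vpt (pv u)) = sh d (Pv (pv u)).
  apply: sh_eq.
    split; first by change (vanc (pv (F (vpt (pv u)))) (pv (Pv (pv u)))); rewrite tF Pv_pv; exact: vanc_refl.
    by rewrite hF Pv_ht /ht /=; lra.
  by rewrite hF Pv_ht /ht /=; lra.
by rewrite /limmap sh_comm //; lra.
Qed.

Lemma lim_cont : mcont limmap.
Proof.
move=> p e e0.
have e4 : 0 < e / 4 by rewrite divr_gt0.
have [d [F [de fF]]] := Hfam e4.
have [d0 cF _ _] := fF.
have e2 : 0 < e / 2 by rewrite divr_gt0.
have [r [r0 Hr]] := cF p _ e2.
exists r; split=> // q pq.
have := Hr _ pq; rewrite !(lim_rel fF) => H.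
apply: dist_mono (dist_unsh (ltW d0) H) _; lra.
Qed.

End Limit.

Section Closure.
Variable R : realType.
Variables T1 T2 : mtree R.
Variable eps : R.

Lemma closure_compat (e0 : 0 <= eps) :
  (forall d, 0 < d -> exists alpha beta, @compatible R T1 T2 (eps + d) alpha beta) ->
  exists alpha beta, @compatible R T1 T2 eps alpha beta.
Proof.
move=> H.
pose K := ({ffun vert T1 -> vert T2} * {ffun vert T2 -> vert T1})%type.
pose Q (k : K) (eta : R) := exists d : R, 0 < d /\ d < eta /\
  exists alpha beta, @compatible R T1 T2 (eps + d) alpha beta /\
    (forall v, pv (alpha (vpt v)) = k.1 v) /\ (forall v, pv (beta (vpt v)) = k.2 v).
have [k Hk] : exists k, forall eta, 0 < eta -> Q k eta.
  apply: pigeon.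
    move=> eta eta0.
    have eta2 : 0 < eta / 2 by rewrite divr_gt0.
    have [alpha [beta C]] := H _ eta2.
    exists ([ffun v => pv (alpha (vpt v))], [ffun v => pv (beta (vpt v))]).
    exists (eta / 2); split=> //; split; first lra.
    by exists alpha, beta; split=> //; split=> v; rewrite ffunE.
  move=> k' eta eta' [d [d0 [de X]]] ee; exists d; split=> //; split=> //; lra.
have HA : forall eta, 0 < eta -> exists d F, d < eta /\ fam eps k.1 F d.
  move=> eta eta0; have [d [d0 [de [alpha [beta [[ca cb Ha Hb] [t1 t2]]]]]]] := Hk _ eta0.
  exists d, alpha; split=> //; split=> // u; by case: (Ha u).
have HB : forall eta, 0 < eta -> exists d F, d < eta /\ fam eps k.2 F d.
  move=> eta eta0; have [d [d0 [de [alpha [beta [[ca cb Ha Hb] [t1 t2]]]]]]] := Hk _ eta0.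
  exists d, beta; split=> //; split=> // u; by case: (Hb u).
pose aL := limmap eps k.1; pose bL := limmap eps k.2.
have caL : mcont aL := lim_cont HA.
have cbL : mcont bL := lim_cont HB.
have haL : forall u, ht (aL u) = ht u + eps := lim_ht HA.
have hbL : forall w, ht (bL w) = ht w + eps := lim_ht HB.
have maL := cont_mono haL caL; have mbL := cont_mono hbL cbL.
have e2 : 0 <= 2 * eps by lra.
exists aL, bL; split=> //.
- move=> u; split=> //.
  suff -> : bL (aL u) = sh (2 * eps) u by apply: is_shift_sh.
  apply: sh_cancel; first by rewrite hbL haL sh_ht //; lra.
  move=> eta eta0; have eta2 : 0 < eta / 2 by rewrite divr_gt0.
  have [d [d0 [de [alpha [beta [C [t1 t2]]]]]]] := Hk _ eta2.
  have [ca cb Ha Hb] := C.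
  have fa : fam eps k.1 alpha d by split=> // x; case: (Ha x).
  have fb : fam eps k.2 beta d by split=> // x; case: (Hb x).
  exists (2 * d); split; first lra. split; first lra.
  have E := is_shiftE (Ha u).2.
  rewrite (lim_rel HB fb) (lim_rel HA fa) in E.
  rewrite -/aL -/bL mbL in E; last lra.
  rewrite sh_add in E; [|lra|lra].
  rewrite sh_add; [|lra|lra].
  rewrite (_ : 2 * d = d + d); last lra.
  by rewrite E; congr sh; lra.
- move=> w; split=> //.
  suff -> : aL (bL w) = sh (2 * eps) w by apply: is_shift_sh.
  apply: sh_cancel; first by rewrite haL hbL sh_ht //; lra.
  move=> eta eta0; have eta2 : 0 < eta / 2 by rewrite divr_gt0.
  have [d [d0 [de [alpha [beta [C [t1 t2]]]]]]] := Hk _ eta2.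
  have [ca cb Ha Hb] := C.
  have fa : fam eps k.1 alpha d by split=> // x; case: (Ha x).
  have fb : fam eps k.2 beta d by split=> // x; case: (Hb x).
  exists (2 * d); split; first lra. split; first lra.
  have E := is_shiftE (Hb w).2.
  rewrite (lim_rel HA fa) (lim_rel HB fb) in E.
  rewrite -/aL -/bL maL in E; last lra.
  rewrite sh_add in E; [|lra|lra].
  rewrite sh_add; [|lra|lra].
  rewrite (_ : 2 * d = d + d); last lra.
  by rewrite E; congr sh; lra.
Qed.

End Closure.

Unset Implicit Arguments.
Unset Strict Implicit.

Theorem theorem1 (R : realType) (T1 T2 : mtree R) (eps : R) (heps : 0 <= eps) :
  (dI T1 T2 <= eps%:E)%E <->
  exists alpha : mpoint T1 -> mpoint T2, good eps alpha.
Proof.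
split.
  move=> H.
  have H2 : forall d, 0 < d -> exists alpha beta, @compatible R T1 T2 (eps + d) alpha beta.
    move=> d d0.
    have lt : (dI T1 T2 < (eps + d)%:E)%E.
      by apply: (le_lt_trans H); rewrite lte_fin; lra.
    have [y [e [e0 [alpha [beta C]]] <-] ylt] := ereal_inf_lt lt.
    move: ylt; rewrite lte_fin => ylt.
    exists (fun u => sh (eps + d - e) (alpha u)), (fun w => sh (eps + d - e) (beta w)).
    by apply: compat_up => //; lra.
  have [alpha [beta C]] := closure_compat heps H2.
  by exists alpha; apply: compat_good C.
move=> [alpha ga].
apply: ge_ereal_inf; exists (eps%:E) => //.
exists eps => //; split=> //.
exists alpha, (betamap eps alpha); exact: good_compat.
Qed.
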